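(* Let $p(n,k)$ be the number of $\mathbf{3}$-free naturally labelled posets on $[n]$ with exactly $k$ minimal elements. Then $p(0,0)=1$, $p(n,0)=0$ for $n\ge1$, $p(n,k)=0$ for $n<k$, and for $n\ge1$, $k\ge1$: $$p(n,k)=p(n-1,k-1)+(2^k-1)\,p(n-1,k).$$ Consequently $p(n,k)=S_2[n,k]$, where the $q$-Stirling numbers of the second kind $S_q[n,k]$ satisfy $S_q[n,k]=S_q[n-1,k-1]+[k]_q\,S_q[n-1,k]$ with $[k]_q=1+q+\dots+q^{k-1}$ and the same initial conditions. Moreover, the bivariate generating function $F(z,y)=\sum_{n\ge k\ge 0}p(n,k)z^ny^k$ satisfies $$F(z,y)=1+z\big(F(z,2y)-(1-y)F(z,y)\big),$$ and $$F(z,y)=\sum_{k\ge0}\frac{z^ky^k}{\prod_{i=1}^k\big(1-(2^i-1)z\big)}.$$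
   Context: A partial order $\preceq$ on $[n]$ is naturally labelled if $x\prec y$ implies $x<y$. It is $\mathbf{3}$-free if there are no three elements $x\prec y\prec z$. *)

(* Defs.v *)
From mathcomp Require Import all_boot all_order all_algebra.
Set Implicit Arguments. Unset Strict Implicit. Unset Printing Implicit Defensive.
Import GRing.Theory.

(* A partial order on [n] = 'I_n is encoded by its graph R (the relation x <= y),
   as a set of pairs. *)
Section Posets.
Variable n : nat.
Implicit Type R : {set 'I_n * 'I_n}.

Definition is_poset R : bool :=
  [&& [forall x, (x, x) \in R],
      [forall x, forall y, ((x, y) \in R) && ((y, x) \in R) ==> (x == y)] &
      [forall x, forall y, forall z, ((x, y) \in R) && ((y, z) \in R) ==> ((x, z) \in R)]].

Definition strict R (x y : 'I_n) : bool := (x != y) && ((x, y) \in R).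

Definition naturally_labelled R : bool :=
  [forall x, forall y, strict R x y ==> (x < y)%N].

Definition three_free R : bool :=
  ~~ [exists x, exists y, exists z, strict R x y && strict R y z].

Definition minimal R (x : 'I_n) : bool := [forall y, ~~ strict R y x].

Definition minimals R : {set 'I_n} := [set x | minimal R x].
End Posets.

Definition p (n k : nat) : nat :=
  #|[set R : {set 'I_n * 'I_n} |
      [&& is_poset R, naturally_labelled R, three_free R & #|minimals R| == k]]|.

Definition qint (q k : nat) : nat := \sum_(i < k) q ^ i.

Fixpoint qstirling (q n k : nat) : nat :=
  match n, k with
  | 0, 0 => 1
  | 0, _.+1 => 0
  | _.+1, 0 => 0
  | n'.+1, k'.+1 => qstirling q n' k' + qint q k'.+1 * qstirling q n' k'.+1
  end.

(* Formal power series in z with coefficients in a ring (here {poly int},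
   the variable of the polynomials being y). *)
Definition fps (R : Type) := nat -> R.

Section FPS.
Variable R : pzRingType.
Local Open Scope ring_scope.
Definition fps_const (c : R) : fps R := fun m => if m == 0%N then c else 0.
Definition fps_z : fps R := fun m => if m == 1%N then 1 else 0.
Definition fps_add (f g : fps R) : fps R := fun m => f m + g m.
Definition fps_sub (f g : fps R) : fps R := fun m => f m - g m.
Definition fps_mul (f g : fps R) : fps R :=
  fun m => \sum_(i < m.+1) f i * g (m - i)%N.
Definition fps_exp (f : fps R) (k : nat) : fps R := iter k (fps_mul f) (fps_const 1).
End FPS.
Arguments fps_z {R}.
Arguments fps_const {R}.

Local Open Scope ring_scope.

(* F(z,y) = sum_{n >= k >= 0} p(n,k) z^n y^k, as a series in z whose
   z^n-coefficient is the polynomial sum_{k<=n} p(n,k) y^k. *)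
Definition F : fps {poly int} := fun n => \sum_(k < n.+1) ((p n k)%:R : int) *: 'X^k.

Definition F2 : fps {poly int} := fun n => F n \Po (2%:P * 'X).

Definition fps_y : fps {poly int} := fps_const 'X.

Definition denom (k : nat) : fps {poly int} :=
  \big[@fps_mul _/fps_const 1]_(1 <= i < k.+1)
     fps_sub (fps_const 1) (fps_mul (fps_const ((2 ^ i - 1)%N%:R)) fps_z).

Definition num (k : nat) : fps {poly int} := fps_mul (fps_exp fps_z k) (fps_exp fps_y k).

(* Main.v *)
Require Import Defs.
From mathcomp Require Import all_boot all_order all_algebra.
From mathcomp Require Import zify.
From HB Require Import structures.
From Stdlib Require Import FunctionalExtensionality.
Set Implicit Arguments. Unset Strict Implicit. Unset Printing Implicit Defensive.
Import GRing.Theory.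

Definition good n (R : {set 'I_n * 'I_n}) :=
  [&& is_poset R, naturally_labelled R & three_free R].

Lemma goodP n (R : {set 'I_n * 'I_n}) :
  good R <-> [/\ (forall x, (x,x) \in R),
     (forall x y z, (x,y) \in R -> (y,z) \in R -> (x,z) \in R),
     (forall x y, x != y -> (x,y) \in R -> (x < y)%N) &
     (forall x y z, x != y -> y != z -> (x,y) \in R -> (y,z) \in R -> False)].
Proof.
split.
- case/and3P=> /and3P[/forallP r _ /forallP t] /forallP nl /existsPn tf; split.
  + exact: r.
  + move=> x y z h1 h2; move/forallP: (t x) => /(_ y) /forallP /(_ z) /implyP; apply.
    by rewrite h1 h2.
  + move=> x y h1 h2; move/forallP: (nl x) => /(_ y) /implyP; apply.
    by rewrite /strict h1 h2.
  + move=> x y z h1 h2 h3 h4; move: (tf x) => /existsPn /(_ y) /existsPn /(_ z).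
    by rewrite /strict h1 h2 h3 h4.
- case=> r t nl tf; apply/and3P; split.
  + apply/and3P; split.
    * by apply/forallP.
    * apply/forallP=> x; apply/forallP=> y; apply/implyP=> /andP[h1 h2].
      apply/negbNE/negP=> ne.
      have := nl _ _ ne h1; have := nl y x; rewrite eq_sym ne => /(_ isT h2).
      by move=> a b; have := ltn_trans a b; rewrite ltnn.
    * apply/forallP=> x; apply/forallP=> y; apply/forallP=> z; apply/implyP=> /andP[h1 h2].
      exact: t h1 h2.
  + apply/forallP=> x; apply/forallP=> y; apply/implyP=> /andP[h1 h2]; exact: nl.
  + apply/existsPn=> x; apply/existsPn=> y; apply/existsPn=> z.
    apply/negP=> /andP[/andP[h1 h2] /andP[h3 h4]]; exact: tf h1 h3 h2 h4.
Qed.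

Section Step.
Variable n : nat.
Notation N := n.+1.
Local Notation w := (@lift N ord_max).

Definition res (R : {set 'I_N * 'I_N}) : {set 'I_n * 'I_n} :=
  [set ab | (w ab.1, w ab.2) \in R].
Definition sup (R : {set 'I_N * 'I_N}) : {set 'I_n} :=
  [set a | (w a, ord_max) \in R].
Definition ext (R : {set 'I_n * 'I_n}) (S : {set 'I_n}) : {set 'I_N * 'I_N} :=
  [set xy | match unlift ord_max xy.1, unlift ord_max xy.2 with
   | Some a, Some b => (a,b) \in R
   | Some a, None => a \in S
   | None, None => true
   | None, Some _ => false end].

Lemma resE R a b : ((a,b) \in res R) = ((w a, w b) \in R).
Proof. by rewrite inE. Qed.
Lemma supE R a : (a \in sup R) = ((w a, ord_max) \in R).
Proof. by rewrite inE. Qed.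
Lemma ext_ww R S a b : ((w a, w b) \in ext R S) = ((a,b) \in R).
Proof. by rewrite inE /= !liftK. Qed.
Lemma ext_wm R S a : ((w a, ord_max) \in ext R S) = (a \in S).
Proof. by rewrite inE /= liftK unlift_none. Qed.
Lemma ext_mm R S : ((ord_max, ord_max) \in ext R S).
Proof. by rewrite inE /= unlift_none. Qed.
Lemma ext_mw R S b : ((ord_max, w b) \in ext R S) = false.
Proof. by rewrite inE /= liftK unlift_none. Qed.

Lemma wval (a : 'I_n) : (w a : nat) = a. Proof. exact: lift_max. Qed.
Lemma w_neq (a : 'I_n) : (w a != ord_max). Proof. by rewrite eq_sym neq_lift. Qed.
Lemma m_neq (a : 'I_n) : (ord_max != w a). Proof. exact: neq_lift. Qed.
Lemma w_lt (a : 'I_n) : (w a < @ord_max n)%N. Proof. by rewrite wval /=. Qed.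
Lemma w_eq (a b : 'I_n) : (w a == w b) = (a == b). Proof. exact/inj_eq/lift_inj. Qed.

Ltac cs x := let a := fresh "a" in have [a ->|->] := unliftP ord_max x.

Lemma good_res R : good R -> good (res R).
Proof.
case/goodP=> r t nl tf; apply/goodP; split.
- by move=> x; rewrite resE.
- move=> x y z; rewrite !resE; exact: t.
- move=> x y ne; rewrite resE -(w_eq x y) in ne * => h.
  by have := nl _ _ ne h; rewrite !wval.
- move=> x y z; rewrite !resE -(w_eq x y) -(w_eq y z); exact: tf.
Qed.

Lemma sup_min R : good R -> sup R \subset minimals (res R).
Proof.
case/goodP=> r t nl tf; apply/subsetP=> a; rewrite supE inE => h.
apply/forallP=> b; apply/negP=> /andP[ne hb]; rewrite resE -(w_eq b a) in ne hb.
exact: tf ne (w_neq a) hb h.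
Qed.

Lemma min_w R a : good R -> (w a \in minimals R) = (a \in minimals (res R)).
Proof.
case/goodP=> r t nl tf; rewrite !inE; apply/forallP/forallP.
- move=> h b; have := h (w b); by rewrite /strict resE w_eq.
- move=> h y; cs y.
  + by have := h a0; rewrite /strict resE w_eq.
  + apply/negP=> /andP[ne hy]; have := nl _ _ ne hy; rewrite wval /=.
    by move=> lt; have := ltn_ord a; rewrite /=; lia.
Qed.

Lemma min_m R : good R -> (ord_max \in minimals R) = (sup R == set0).
Proof.
case/goodP=> r t nl tf; rewrite !inE; apply/forallP/eqP.
- move=> h; apply/setP=> a; rewrite supE inE; apply/negP=> ha.
  by have := h (w a); rewrite /strict w_neq ha.
- move=> h y; cs y.
  + by rewrite /strict -supE h inE andbF.
  + by rewrite /strict eqxx.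
Qed.

Lemma card_split (A : {set 'I_N}) :
  #|A| = (ord_max \in A) + #|[set a : 'I_n | w a \in A]|.
Proof.
rewrite (cardD1 ord_max); congr (_ + _).
rewrite -(card_imset _ (@lift_inj N ord_max)); apply: eq_card => x.
rewrite !inE; cs x.
- rewrite w_neq /= mem_imset ?inE //; exact: lift_inj.
- rewrite eqxx /=; apply/esym/negP=> /imsetP[b _ /eqP]; by rewrite (negbTE (m_neq b)).
Qed.

Lemma card_min R : good R ->
  #|minimals R| = #|minimals (res R)| + (sup R == set0).
Proof.
move=> g; rewrite card_split min_m // addnC; congr (_ + _).
apply: eq_card => a; by rewrite inE min_w.
Qed.

Lemma res_ext_eq R : good R -> R = ext (res R) (sup R).
Proof.
case/goodP=> r t nl tf; apply/setP=> [[x y]]; cs x; cs y.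
- by rewrite ext_ww resE.
- by rewrite ext_wm supE.
- rewrite ext_mw; apply/negP=> h; have := nl _ _ (m_neq a) h.
  by rewrite wval /= => lt; have := ltn_ord a; rewrite /=; lia.
- by rewrite ext_mm r.
Qed.

Lemma ext_good (R : {set 'I_n * 'I_n}) (S : {set 'I_n}) : good R -> S \subset minimals R ->
  [/\ good (ext R S), res (ext R S) = R & sup (ext R S) = S].
Proof.
case/goodP=> r t nl tf /subsetP sm; split.
- apply/goodP; split.
  + move=> x; cs x; [by rewrite ext_ww | exact: ext_mm].
  + move=> x y z; cs x; cs y; cs z; rewrite ?ext_ww ?ext_wm ?ext_mw ?ext_mm //.
    * exact: t.
    * move=> h hb; have := sm _ hb; rewrite inE => /forallP /(_ a) .
      case: (eqVneq a a0) => [->//|ne]; by rewrite /strict ne h.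
  + move=> x y; cs x; cs y; rewrite ?ext_ww ?ext_wm ?ext_mw ?ext_mm ?eqxx ?w_eq //.
    * by move=> ne /(nl _ _ ne); rewrite !wval.
    * by move=> _ _; apply: w_lt.
  + move=> x y z; cs x; cs y; cs z; rewrite ?ext_ww ?ext_wm ?ext_mw ?ext_mm ?eqxx ?w_eq //.
    * exact: tf.
    * move=> ne _ h hb; have := sm _ hb; rewrite inE => /forallP /(_ a).
      by rewrite /strict ne h.
- by apply/setP=> [[a b]]; rewrite resE ext_ww.
- by apply/setP=> a; rewrite supE ext_wm.
Qed.

Definition Q k (R : {set 'I_n * 'I_n}) (S : {set 'I_n}) :=
  [&& good R, S \subset minimals R & #|minimals R| + (S == set0) == k].

Lemma card_bij k :
  #|[set R : {set 'I_N * 'I_N} | good R && (#|minimals R| == k)]| =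
  #|[set u : {set 'I_n * 'I_n} * {set 'I_n} | Q k u.1 u.2]|.
Proof.
rewrite -(card_in_imset (f := fun R => (res R, sup R))).
- apply: eq_card => -[R' S]; rewrite [in RHS]inE /=; apply/imsetP/idP.
  + case=> R; rewrite inE => /andP[g /eqP <-] [-> ->].
    by rewrite /Q good_res // sup_min // (card_min g) /= eqxx.
  + case/and3P=> g sm /eqP c; have [g' r' s'] := ext_good g sm.
    exists (ext R' S); last by rewrite r' s'.
    by rewrite inE g' card_min // r' s' c eqxx.
- move=> R1 R2; rewrite !inE => /andP[g1 _] /andP[g2 _] [e1 e2].
  by rewrite (res_ext_eq g1) (res_ext_eq g2) e1 e2.
Qed.
End Step.

Lemma cardS (T : finType) (P : pred T) : #|[set x | P x]| = \sum_x (P x : nat).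
Proof.
rewrite -sum1_card big_mkcond; apply: eq_bigr => x _; rewrite inE; by case: (P x).
Qed.

Lemma pE n k : p n k = #|[set R : {set 'I_n * 'I_n} | good R && (#|minimals R| == k)]|.
Proof. by apply: eq_card => R; rewrite !inE /good !andbA. Qed.

Lemma card_nonempty (T : finType) (M : {set T}) :
  #|[set S : {set T} | (S \subset M) && (S != set0)]| = 2 ^ #|M| - 1.
Proof.
rewrite -card_powerset [#|powerset M|](cardD1 set0) inE sub0set /= add1n subn1 /=.
by apply: eq_card => S; rewrite !inE andbC.
Qed.

Lemma inner n k (R : {set 'I_n * 'I_n}) :
  \sum_(S : {set 'I_n}) (Q k.+1 R S : nat) =
  ((good R && (#|minimals R| == k)) : nat) +
  ((good R && (#|minimals R| == k.+1)) : nat) * (2 ^ k.+1 - 1).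
Proof.
rewrite /Q; case: (good R) => /=; last by rewrite big1.
rewrite (eq_bigr (fun S : {set 'I_n} => if S \subset minimals R then
   ((#|minimals R| + (S == set0) == k.+1) : nat) else 0%N)); last first.
  by move=> S _; case: (S \subset _).
rewrite -big_mkcond /= (bigD1 set0) ?sub0set //= eqxx addn1 eqSS.
congr (_ + _).
rewrite (eq_bigr (fun _ => (#|minimals R| == k.+1) : nat)); last first.
  by move=> S /andP[_ /negbTE ->]; rewrite addn0.
rewrite sum_nat_const.
case: eqP => [e|_]; rewrite ?muln0 ?mul0n ?muln1 ?mul1n //.
rewrite -e -card_nonempty; apply: eq_card => S; by rewrite inE.
Qed.

Lemma p_rec n k : p n.+1 k.+1 = p n k + (2 ^ k.+1 - 1) * p n k.+1.
Proof.
rewrite pE card_bij cardS.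
rewrite (eq_bigr (fun u => (Q k.+1 u.1 u.2 : nat))) //.
rewrite -(pair_big predT predT (fun R S => (Q k.+1 R S : nat))) /=.
rewrite (eq_bigr _ (fun R _ => inner k R)) big_split /= -big_distrl /= mulnC.
by rewrite !pE !cardS.
Qed.

Section FPSAlg.
Variable R : comNzRingType.
Local Open Scope ring_scope.
Implicit Types f g h : fps R.

Definition T (M : nat) f : {poly R} := \poly_(i < M) f i.

Lemma mulT f g m M : (m < M)%N -> fps_mul f g m = (T M f * T M g)`_m.
Proof.
move=> lt; rewrite coefM; apply: eq_bigr => i _; rewrite !coef_poly.
have hi : (i < M)%N by apply: leq_ltn_trans lt; rewrite -ltnS.
by rewrite hi (leq_ltn_trans (leq_subr _ _) lt).
Qed.

Lemma truncM (P P' S : {poly R}) M m : (forall i, (i < M)%N -> P`_i = P'`_i) ->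
  (m < M)%N -> (P * S)`_m = (P' * S)`_m.
Proof.
move=> e lt; rewrite !coefM; apply: eq_bigr => i _; rewrite e //.
by apply: leq_ltn_trans lt; rewrite -ltnS.
Qed.

Arguments truncM [P P'] S [M m].

Lemma T_mul f g M i : (i < M)%N -> (T M (fps_mul f g))`_i = (T M f * T M g)`_i.
Proof. by move=> lt; rewrite coef_poly lt (mulT _ _ lt). Qed.

Lemma fps_mulC f g : fps_mul f g = fps_mul g f.
Proof.
apply: functional_extensionality => m.
by rewrite (mulT _ _ (ltnSn m)) (mulT g f (ltnSn m)) mulrC.
Qed.

Lemma fps_mulA f g h : fps_mul f (fps_mul g h) = fps_mul (fps_mul f g) h.
Proof.
apply: functional_extensionality => m.
rewrite (mulT _ _ (ltnSn m)) (mulT _ h (ltnSn m)).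
rewrite (truncM (T m.+1 h) (@T_mul f g m.+1) (ltnSn m)) -mulrA.
rewrite mulrC (mulrC (T m.+1 f)).
by rewrite (truncM (T m.+1 f) (@T_mul g h m.+1) (ltnSn m)).
Qed.

Lemma T_const c M : (0 < M)%N -> T M (fps_const c) = c%:P.
Proof.
move=> M0; apply/polyP => i; rewrite coef_poly coefC /fps_const.
case: i => [|i] /=; first by rewrite M0.
by case: ifP.
Qed.

Lemma fps_mulcE c f m : fps_mul (fps_const c) f m = c * f m.
Proof.
by rewrite (mulT _ _ (ltnSn m)) T_const // coefCM coef_poly ltnSn.
Qed.

Lemma fps_mul1 f : fps_mul (fps_const 1) f = f.
Proof. by apply: functional_extensionality => m; rewrite fps_mulcE mul1r. Qed.

Lemma fps_mulzE f m : fps_mul fps_z f m = if m == 0%N then 0 else f m.-1.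
Proof.
rewrite (mulT _ _ (ltnW (ltnSn m.+1))).
have -> : T m.+2 fps_z = 'X.
  apply/polyP => i; rewrite coef_poly coefX /fps_z.
  by case: i => [|[|i]] //=; case: ifP.
rewrite coefXM coef_poly; case: m => //= m.
by rewrite ltnS ltnW.
Qed.

Lemma fps_mul_subE (a b : fps R) f m :
  fps_mul (fps_sub a b) f m = fps_mul a f m - fps_mul b f m.
Proof.
rewrite /fps_mul /fps_sub -sumrB; apply: eq_bigr => i _; exact: mulrBl.
Qed.

Lemma fps_mul0E f g : fps_mul f g 0%N = f 0%N * g 0%N.
Proof. by rewrite /fps_mul big_ord1. Qed.

Lemma fps_cancel (a b d : fps R) : d 0%N = 1 -> (forall m, fps_mul a d m = fps_mul b d m) ->
  forall m, a m = b m.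
Proof.
move=> d0 e m; elim/ltn_ind: m => m IH.
move: (e m); rewrite /fps_mul !big_ord_recr /= subnn d0 !mulr1.
rewrite (eq_bigr (fun i : 'I_m => b i * d (m - i)%N)); first by move/addrI.
by move=> i _; rewrite IH.
Qed.
End FPSAlg.

Lemma p_large n k : (n < k)%N -> p n k = 0%N.
Proof.
move=> lt; rewrite pE; apply: eq_card0 => R; rewrite !inE.
apply/negP=> /andP[_ /eqP e]; have := max_card (minimals R).
by rewrite card_ord e leqNgt lt.
Qed.

Lemma p_n0 n : p n.+1 0 = 0%N.
Proof.
rewrite pE; apply: eq_card0 => R; rewrite !inE.
apply/negP=> /andP[/goodP[_ _ nl _] /eqP e].
have : ord0 \in minimals R.
  rewrite inE; apply/forallP=> y; apply/negP=> /andP[ne h].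
  by have := nl _ _ ne h.
by rewrite (cards0_eq e) inE.
Qed.

Lemma p00 : p 0 0 = 1%N.
Proof.
have g : good (set0 : {set 'I_0 * 'I_0}) by apply/goodP; split; case.
have c : #|minimals (set0 : {set 'I_0 * 'I_0})| = 0%N.
  by apply: eq_card0 => -[].
rewrite pE -(cards1 (set0 : {set 'I_0 * 'I_0})); apply: eq_card => R.
have -> : R = set0 by apply/setP => -[[]].
rewrite !inE eqxx; apply/andP; split; first exact: g.
by apply/eqP; exact: c.
Qed.

From mathcomp Require Import ring.
Local Open Scope ring_scope.

Notation PI := {poly int}.
HB.instance Definition _ := Monoid.isComLaw.Build (fps PI) (fps_const 1)
  (@fps_mul PI) (@fps_mulA PI) (@fps_mulC PI) (@fps_mul1 PI).

Definition xk (i : nat) : PI := (2 ^ i - 1)%N%:R.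
Definition L (i : nat) : fps PI := fps_sub (fps_const 1) (fps_mul (fps_const (xk i)) fps_z).
Definition Gp (k : nat) : fps PI := fun m => ((p m k)%:R : int) *: 'X^k.

Lemma denomS k : denom k.+1 = fps_mul (denom k) (L k.+1).
Proof. by rewrite /denom big_nat_recr. Qed.

Lemma denom_0 : denom 0 = fps_const 1.
Proof. by rewrite /denom big_geq. Qed.

Lemma denom0 k : denom k 0%N = 1.
Proof.
elim: k => [|k IH]; first by rewrite denom_0.
rewrite denomS fps_mul0E IH mul1r /L /fps_sub fps_mulcE.
by rewrite /fps_z /fps_const /= mulr0 subr0.
Qed.

Lemma numS k : num k.+1 = fps_mul fps_z (fps_mul fps_y (num k)).
Proof.
rewrite /num /fps_exp !iterS -/(fps_exp _ _).
rewrite -!fps_mulA; congr fps_mul.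
by rewrite fps_mulC -fps_mulA; congr fps_mul; rewrite fps_mulC.
Qed.

Lemma Gp_eq k m : fps_mul (Gp k) (denom k) m = num k m.
Proof.
elim: k m => [|k IH] m.
  rewrite denom_0 fps_mulC fps_mul1 /num /fps_exp /= fps_mul1 /Gp /fps_const expr0.
  case: m => [|m]; first by rewrite p00 scale1r.
  by rewrite p_n0 scale0r.
rewrite denomS fps_mulA.
have -> : fps_mul (Gp k.+1) (denom k) = fps_mul (denom k) (Gp k.+1) by rewrite fps_mulC.
rewrite -fps_mulA.
have -> : fps_mul (Gp k.+1) (L k.+1) = fps_mul fps_z (fps_mul fps_y (Gp k)).
  apply: functional_extensionality => j.
  rewrite fps_mulC fps_mul_subE fps_mul1 -fps_mulA fps_mulcE !fps_mulzE.
  case: j => [|j] /=.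
    by rewrite /Gp p_large // scale0r mulr0 subr0.
  rewrite /fps_y fps_mulcE /Gp p_rec /xk -!mul_polyC !rmorph_nat natrD natrM exprS.
  ring.
rewrite fps_mulC -!fps_mulA.
have -> : fps_mul (Gp k) (denom k) = num k.
  by apply: functional_extensionality => j; rewrite IH.
by rewrite numS.
Qed.

Lemma Gp_uniq (G : nat -> fps PI) :
  (forall k m, fps_mul (G k) (denom k) m = num k m) -> forall k m, G k m = Gp k m.
Proof.
move=> hG k; apply: (fps_cancel (denom0 k)) => m.
by rewrite hG Gp_eq.
Qed.

Lemma coef_sumZX (c : nat -> int) M j :
  (\sum_(k < M) c k *: 'X^k)`_j = if (j < M)%N then c j else 0.
Proof.
rewrite coef_sum; case: ltnP => h.
  rewrite (bigD1 (Ordinal h)) //= coefZ coefXn eqxx mulr1 big1 ?addr0 // => k ne.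
  rewrite coefZ coefXn; move: ne; rewrite -val_eqE /= eq_sym => /negbTE ->.
  by rewrite mulr0.
rewrite big1 // => k _; rewrite coefZ coefXn.
rewrite (_ : (j == k) = false) ?mulr0 //; apply/negbTE.
by rewrite neq_ltn (leq_trans (ltn_ord k) h) orbT.
Qed.

Lemma coefF m j : (F m)`_j = (p m j)%:R.
Proof.
rewrite /F (coef_sumZX (fun k => (p m k)%:R)); case: ltnP => // h; by rewrite p_large.
Qed.

Lemma coefF2 m j : (F2 m)`_j = (p m j)%:R * 2 ^+ j.
Proof.
have -> : F2 m = \sum_(k < m.+1) ((p m k)%:R * 2 ^+ k) *: 'X^k.
  rewrite /F2 /F (big_morph (fun q => q \Po (2%:P * 'X)) (fun a b => comp_polyD a b (2%:P * 'X)) (comp_poly0 _)).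
  apply: eq_bigr => k _.
  by rewrite comp_polyZ comp_Xn_poly exprMn -rmorphXn mul_polyC scalerA.
rewrite (coef_sumZX (fun k => (p m k)%:R * 2 ^+ k)); case: ltnP => // h; by rewrite p_large // mul0r.
Qed.

Lemma qint2 k : qint 2 k = (2 ^ k - 1)%N.
Proof.
rewrite /qint; elim: k => [|k IH]; first by rewrite big_ord0.
rewrite big_ord_recr /= IH expnS; have := expn_gt0 2 k; lia.
Qed.

Lemma F_rec m : F m =
  fps_add (fps_const 1)
    (fps_mul fps_z (fps_sub F2 (fps_mul (fps_sub (fps_const 1) fps_y) F))) m.
Proof.
rewrite /fps_add fps_mulzE; case: m => [|m] /=.
  rewrite addr0 /fps_const /=; apply/polyP => j; rewrite coefF coef1.
  by case: j => [|j]; rewrite ?p00 // p_large.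
rewrite /fps_const /= add0r /fps_sub fps_mul_subE fps_mul1 /fps_y fps_mulcE.
apply/polyP => j; rewrite coefB coefB coefF coefF2 coefF coefXM.
case: j => [|j] /=.
  by rewrite p_n0 expr0 mulr1 subr0 subrr.
rewrite coefF p_rec natrD natrM natrB ?expn_gt0 // natrX.
ring.
Qed.

Theorem proposition4 :
  [/\ p 0 0 = 1%N,
      (forall n, (1 <= n)%N -> p n 0 = 0%N),
      (forall n k, (n < k)%N -> p n k = 0%N),
      (forall n k, (1 <= n)%N -> (1 <= k)%N ->
         p n k = (p n.-1 k.-1 + (2 ^ k - 1) * p n.-1 k)%N)
    & [/\
      (forall n k, p n k = qstirling 2 n k) /\
      (* F(z,y) = 1 + z (F(z,2y) - (1-y) F(z,y)), coefficientwise in z *)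
      (forall m, F m =
         fps_add (fps_const 1)
           (fps_mul fps_z (fps_sub F2 (fps_mul (fps_sub (fps_const 1) fps_y) F))) m)
    & (* F(z,y) = sum_k z^k y^k / prod_{i=1}^k (1 - (2^i-1) z):
         the quotients G k exist, and for any such G the series sum_k G k
         converges z-adically to F *)
      (exists G : nat -> fps {poly int},
         forall k m, fps_mul (G k) (denom k) m = num k m) /\
      (forall G : nat -> fps {poly int},
         (forall k m, fps_mul (G k) (denom k) m = num k m) ->
         forall m, exists N, forall K, (N <= K)%N ->
           \sum_(k < K) G k m = F m)]].
Proof.
split.
- exact: p00.
- by case=> // n _; exact: p_n0.
- exact: p_large.
- by case=> // n [|k] // _ _; rewrite p_rec.
- split.
  + split; last exact: F_rec.
    elim=> [|n IH] [|k] //=; first by rewrite p00.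
    * by rewrite p_large.
    * by rewrite p_n0.
    * by rewrite p_rec !IH qint2.
  + split; first by exists Gp; exact: Gp_eq.
    move=> G hG m; exists m.+1 => K hK.
    rewrite (eq_bigr (fun k : 'I_K => Gp k m)); last by move=> k _; rewrite (Gp_uniq hG).
    apply/polyP => j; rewrite /Gp (coef_sumZX (fun k => (p m k)%:R)) coefF.
    case: ltnP => // h; rewrite p_large //; exact: leq_trans hK h.
Qed.
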